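(* There exist polynomials $N$ and $D$ with rational coefficients in ten variables such that, for every convex cyclic pentagon with area $A$, vertex-triangle areas $(0),(1),(2),(3),(4)$ and side lengths $a_0,\dots,a_4$, $$D\big((0),\dots,(4),a_0^2,\dots,a_4^2\big)\cdot A \;=\; N\big((0),\dots,(4),a_0^2,\dots,a_4^2\big),$$ and $D$ does not vanish identically on such data. In other words, the area of a cyclic pentagon is a rational function of the areas of its vertex triangles and the squares of its side lengths.
   Context: A cyclic pentagon is a pentagon inscribed in a circle. Its vertices are labelled $0,1,2,3,4$ in cyclic order, with indices taken mod $5$. The vertex triangle at vertex $i$ is the triangle with vertices $i-1,i,i+1$, and $(i)$ denotes its area. $A$ denotes the area of the pentagon. *)

(* Defs.v *)
From HB Require Import structures.
From mathcomp Require Import all_boot all_order all_algebra.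
From mathcomp Require Import mpoly.
Set Implicit Arguments. Unset Strict Implicit. Unset Printing Implicit Defensive.
Import Order.TTheory GRing.Theory Num.Theory.
Local Open Scope ring_scope.

Section Pentagon.
Variable R : rcfType.

Definition point := (R * R)%type.

Definition pentagon := 'I_5 -> point.

Definition nxt (i : 'I_5) : 'I_5 := ordS i.
Definition prv (i : 'I_5) : 'I_5 := ord_pred i.

(* twice the signed area of triangle p q r *)
Definition orient (p q r : point) : R :=
  (q.1 - p.1) * (r.2 - p.2) - (q.2 - p.2) * (r.1 - p.1).

Definition dist2 (p q : point) : R := (p.1 - q.1) ^+ 2 + (p.2 - q.2) ^+ 2.

Definition cyclic (P : pentagon) : Prop :=
  exists (c : point) (r2 : R), 0 < r2 /\ forall i, dist2 (P i) c = r2.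

(* (strictly) convex polygon with vertices in cyclic order 0,1,2,3,4:
   for each side (i,i+1), all other vertices lie strictly on the same side,
   the side being the same (left for counterclockwise, right for clockwise)
   for all edges. *)
Definition convex (P : pentagon) : Prop :=
  (forall i j : 'I_5, j != i -> j != nxt i -> 0 < orient (P i) (P (nxt i)) (P j))
  \/
  (forall i j : 'I_5, j != i -> j != nxt i -> orient (P i) (P (nxt i)) (P j) < 0).

(* area of the pentagon (shoelace formula) *)
Definition pent_area (P : pentagon) : R :=
  `| \sum_(i < 5) ((P i).1 * (P (nxt i)).2 - (P (nxt i)).1 * (P i).2) | / 2.

Definition vtri_area (P : pentagon) (i : 'I_5) : R :=
  `| orient (P (prv i)) (P i) (P (nxt i)) | / 2.

Definition side2 (P : pentagon) (i : 'I_5) : R := dist2 (P i) (P (nxt i)).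

Definition pent_data (P : pentagon) : 'I_10 -> R := fun k =>
  if (k < 5)%N then vtri_area P (inord k) else side2 P (inord (k - 5)).

End Pentagon.

Definition evalQ (R : rcfType) (p : {mpoly rat[10]}) (v : 'I_10 -> R) : R :=
  (map_mpoly ratr p).@[v].

(* Main.v *)
Require Import Defs.
From HB Require Import structures.
From mathcomp Require Import all_boot all_order all_algebra.
From mathcomp Require Import mpoly.
From mathcomp Require Import ring lra.
Set Implicit Arguments. Unset Strict Implicit. Unset Printing Implicit Defensive.
Import Order.TTheory GRing.Theory Num.Theory.
Local Open Scope ring_scope.

Section G.
Variable S : comPzRingType.
Definition Lg (a0 a1 a2 a3 a4 t0 t1 t2 t3 t4 : S) :=
  a0*(t0*a1*a2*a3 - t4*a0*a1*a2 + t3*a0*a1*a4 - t2*a0*a3*a4 + t1*a2*a3*a4).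
Definition Dg (t0 t1 t2 t3 t4 e0 e1 e2 e3 e4 : S) :=
  let L0 := Lg e0 e1 e2 e3 e4 t0 t1 t2 t3 t4 in
  let L1 := Lg e1 e2 e3 e4 e0 t1 t2 t3 t4 t0 in
  4%:R * (e0*e1*e2*e3*e4) * (e0 * L1^+2 - e1 * L0^+2).
Definition Ng (t0 t1 t2 t3 t4 e0 e1 e2 e3 e4 : S) :=
  let L0 := Lg e0 e1 e2 e3 e4 t0 t1 t2 t3 t4 in
  let L1 := Lg e1 e2 e3 e4 e0 t1 t2 t3 t4 t0 in
  let L2 := Lg e2 e3 e4 e0 e1 t2 t3 t4 t0 t1 in
  let L3 := Lg e3 e4 e0 e1 e2 t3 t4 t0 t1 t2 in
  let L4 := Lg e4 e0 e1 e2 e3 t4 t0 t1 t2 t3 in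
  (L0+L1+L2+L3+L4) * (e0^+2 * L1^+2 - e1^+2 * L0^+2).
End G.

Lemma core (R : rcfType) (s r e0 e1 e2 e3 e4 w0 w1 w2 w3 w4 t0 t1 t2 t3 t4 : R) :
  r != 0 -> (s = 1 \/ s = -1) ->
  4%:R*r*t0 = s*(e4*w0 + e0*w4) ->
  4%:R*r*t1 = s*(e0*w1 + e1*w0) ->
  4%:R*r*t2 = s*(e1*w2 + e2*w1) ->
  4%:R*r*t3 = s*(e2*w3 + e3*w2) ->
  4%:R*r*t4 = s*(e3*w4 + e4*w3) ->
  4%:R * w0^+2 = e0*(4%:R*r - e0) ->
  4%:R * w1^+2 = e1*(4%:R*r - e1) ->
  Dg t0 t1 t2 t3 t4 e0 e1 e2 e3 e4 * (s * (w0+w1+w2+w3+w4) / 2%:R)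
    = Ng t0 t1 t2 t3 t4 e0 e1 e2 e3 e4
  /\ Dg t0 t1 t2 t3 t4 e0 e1 e2 e3 e4 =
     (e0*e1*e2*e3*e4)^+3 * e0 * e1 * (e0 - e1) / (4%:R * r^+2).
Proof.
move=> r0 hs h0 h1 h2 h3 h4 q0 q1.
have r4 : 4%:R * r != 0 by rewrite mulf_neq0 // pnatr_eq0.
have et : forall t u, 4%:R * r * t = u -> t = u / (4%:R * r).
  by move=> t u <-; field.
move: (et _ _ h0) (et _ _ h1) (et _ _ h2) (et _ _ h3) (et _ _ h4) => -> -> -> -> ->.
have hw0 : w0^+2 = e0*(4%:R*r - e0)/4%:R by rewrite -q0; field.
have hw1 : w1^+2 = e1*(4%:R*r - e1)/4%:R by rewrite -q1; field.
set E := e0*e1*e2*e3*e4.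
have eL : forall a0 a1 a2 a3 a4 v0 v1 v2 v3 v4 : R,
  Lg a0 a1 a2 a3 a4 (s*(a4*v0 + a0*v4)/(4%:R*r)) (s*(a0*v1 + a1*v0)/(4%:R*r))
     (s*(a1*v2 + a2*v1)/(4%:R*r)) (s*(a2*v3 + a3*v2)/(4%:R*r)) (s*(a3*v4 + a4*v3)/(4%:R*r))
  = s*(a0*a1*a2*a3*a4)*v0/(2%:R*r).
  by move=> *; rewrite /Lg; field.
rewrite /Dg /Ng.
rewrite !eL -/E.
rewrite !expr_div_n !exprMn hw0 hw1.
rewrite /E; case: hs => ->; split; field.
all: done.
Qed.

Lemma nxt0 : nxt (inord 0 : 'I_5) = inord 1. Proof. apply/val_inj; rewrite /nxt /= !inordK //. Qed.
Lemma prv0 : prv (inord 0 : 'I_5) = inord 4. Proof. apply/val_inj; rewrite /prv /= !inordK //. Qed.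
Lemma nxt1 : nxt (inord 1 : 'I_5) = inord 2. Proof. apply/val_inj; rewrite /nxt /= !inordK //. Qed.
Lemma prv1 : prv (inord 1 : 'I_5) = inord 0. Proof. apply/val_inj; rewrite /prv /= !inordK //. Qed.
Lemma nxt2 : nxt (inord 2 : 'I_5) = inord 3. Proof. apply/val_inj; rewrite /nxt /= !inordK //. Qed.
Lemma prv2 : prv (inord 2 : 'I_5) = inord 1. Proof. apply/val_inj; rewrite /prv /= !inordK //. Qed.
Lemma nxt3 : nxt (inord 3 : 'I_5) = inord 4. Proof. apply/val_inj; rewrite /nxt /= !inordK //. Qed.
Lemma prv3 : prv (inord 3 : 'I_5) = inord 2. Proof. apply/val_inj; rewrite /prv /= !inordK //. Qed.
Lemma nxt4 : nxt (inord 4 : 'I_5) = inord 0. Proof. apply/val_inj; rewrite /nxt /= !inordK //. Qed.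
Lemma prv4 : prv (inord 4 : 'I_5) = inord 3. Proof. apply/val_inj; rewrite /prv /= !inordK //. Qed.
Lemma neq10 : (inord 1 : 'I_5) != inord 0. Proof. by rewrite -val_eqE /= !inordK. Qed.
Lemma neq20 : (inord 2 : 'I_5) != inord 0. Proof. by rewrite -val_eqE /= !inordK. Qed.
Lemma neq30 : (inord 3 : 'I_5) != inord 0. Proof. by rewrite -val_eqE /= !inordK. Qed.
Lemma neq40 : (inord 4 : 'I_5) != inord 0. Proof. by rewrite -val_eqE /= !inordK. Qed.
Lemma neq01 : (inord 0 : 'I_5) != inord 1. Proof. by rewrite -val_eqE /= !inordK. Qed.
Lemma neq21 : (inord 2 : 'I_5) != inord 1. Proof. by rewrite -val_eqE /= !inordK. Qed.
Lemma neq31 : (inord 3 : 'I_5) != inord 1. Proof. by rewrite -val_eqE /= !inordK. Qed.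
Lemma neq41 : (inord 4 : 'I_5) != inord 1. Proof. by rewrite -val_eqE /= !inordK. Qed.
Lemma neq02 : (inord 0 : 'I_5) != inord 2. Proof. by rewrite -val_eqE /= !inordK. Qed.
Lemma neq12 : (inord 1 : 'I_5) != inord 2. Proof. by rewrite -val_eqE /= !inordK. Qed.
Lemma neq32 : (inord 3 : 'I_5) != inord 2. Proof. by rewrite -val_eqE /= !inordK. Qed.
Lemma neq42 : (inord 4 : 'I_5) != inord 2. Proof. by rewrite -val_eqE /= !inordK. Qed.
Lemma neq03 : (inord 0 : 'I_5) != inord 3. Proof. by rewrite -val_eqE /= !inordK. Qed.
Lemma neq13 : (inord 1 : 'I_5) != inord 3. Proof. by rewrite -val_eqE /= !inordK. Qed.
Lemma neq23 : (inord 2 : 'I_5) != inord 3. Proof. by rewrite -val_eqE /= !inordK. Qed.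
Lemma neq43 : (inord 4 : 'I_5) != inord 3. Proof. by rewrite -val_eqE /= !inordK. Qed.
Lemma neq04 : (inord 0 : 'I_5) != inord 4. Proof. by rewrite -val_eqE /= !inordK. Qed.
Lemma neq14 : (inord 1 : 'I_5) != inord 4. Proof. by rewrite -val_eqE /= !inordK. Qed.
Lemma neq24 : (inord 2 : 'I_5) != inord 4. Proof. by rewrite -val_eqE /= !inordK. Qed.
Lemma neq34 : (inord 3 : 'I_5) != inord 4. Proof. by rewrite -val_eqE /= !inordK. Qed.
Lemma pd0 (R : rcfType) (P : pentagon R) : pent_data P (inord 0) = vtri_area P (inord 0). Proof. by rewrite /pent_data !inordK. Qed.
Lemma pd1 (R : rcfType) (P : pentagon R) : pent_data P (inord 1) = vtri_area P (inord 1). Proof. by rewrite /pent_data !inordK. Qed.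
Lemma pd2 (R : rcfType) (P : pentagon R) : pent_data P (inord 2) = vtri_area P (inord 2). Proof. by rewrite /pent_data !inordK. Qed.
Lemma pd3 (R : rcfType) (P : pentagon R) : pent_data P (inord 3) = vtri_area P (inord 3). Proof. by rewrite /pent_data !inordK. Qed.
Lemma pd4 (R : rcfType) (P : pentagon R) : pent_data P (inord 4) = vtri_area P (inord 4). Proof. by rewrite /pent_data !inordK. Qed.
Lemma pd5 (R : rcfType) (P : pentagon R) : pent_data P (inord 5) = side2 P (inord 0). Proof. by rewrite /pent_data !inordK. Qed.
Lemma pd6 (R : rcfType) (P : pentagon R) : pent_data P (inord 6) = side2 P (inord 1). Proof. by rewrite /pent_data !inordK. Qed.
Lemma pd7 (R : rcfType) (P : pentagon R) : pent_data P (inord 7) = side2 P (inord 2). Proof. by rewrite /pent_data !inordK. Qed.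
Lemma pd8 (R : rcfType) (P : pentagon R) : pent_data P (inord 8) = side2 P (inord 3). Proof. by rewrite /pent_data !inordK. Qed.
Lemma pd9 (R : rcfType) (P : pentagon R) : pent_data P (inord 9) = side2 P (inord 4). Proof. by rewrite /pent_data !inordK. Qed.

Lemma sum5 (R : zmodType) (F : 'I_5 -> R) :
  \sum_(i < 5) F i = F (inord 0) + F (inord 1) + F (inord 2) + F (inord 3) + F (inord 4).
Proof.
rewrite !big_ord_recr big_ord0 /= add0r.
have e : forall i j : 'I_5, val i = val j -> F i = F j by move=> i j /val_inj ->.
by congr (_ + _ + _ + _ + _); apply: e; rewrite /= inordK.
Qed.

Lemma mapX (R : rcfType) (i : 'I_10) : map_mpoly (ratr : rat -> R) ('X_i : {mpoly rat[10]}) = 'X_i.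
Proof. by rewrite map_mpolyX. Qed.

Section Geo.
Variable R : rcfType.
Definition cr (c p q : point R) := (p.1-c.1)*(q.2-c.2) - (q.1-c.1)*(p.2-c.2).

Lemma R1 (a b d c : point R) r : dist2 a c = r -> dist2 b c = r -> dist2 d c = r ->
  4%:R * r * (orient a b d / 2%:R) = dist2 a b * cr c b d + dist2 b d * cr c a b.
Proof.
move=> hA hB hC.
have -> : 4%:R * r * (orient a b d / 2%:R) = 2%:R * r * orient a b d by field.
apply/eqP; rewrite -subr_eq0; apply/eqP.
have -> : 2%:R * r * orient a b d - (dist2 a b * cr c b d + dist2 b d * cr c a b)
  = -(((dist2 a c - r) + (dist2 b c - r)) * cr c b d + ((dist2 b c - r) + (dist2 d c - r)) * cr c a b
      - 2%:R * (dist2 b c - r) * cr c a d).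
  by rewrite /dist2 /orient /cr; ring.
by rewrite hA hB hC subrr; ring.
Qed.

Lemma R2 (a b c : point R) r : dist2 a c = r -> dist2 b c = r ->
  4%:R * (cr c a b)^+2 = dist2 a b * (4%:R * r - dist2 a b).
Proof.
move=> hA hB.
apply/eqP; rewrite -subr_eq0; apply/eqP.
pose d := (a.1-c.1)*(b.1-c.1) + (a.2-c.2)*(b.2-c.2).
have -> : 4%:R * (cr c a b)^+2 - dist2 a b * (4%:R * r - dist2 a b)
  = - (((dist2 a c - r) + (dist2 b c - r)) * (4%:R*d - 4%:R*r - ((dist2 a c - r) + (dist2 b c - r)))
       - 4%:R * (dist2 a c - r) * (dist2 b c - r)).
  by rewrite /dist2 /cr /d; ring.
by rewrite hA hB subrr; ring.
Qed.

Lemma normS (s o : R) : (s = 1 \/ s = -1) -> 0 < s * o -> `|o| = s * o.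
Proof.
case=> -> h; first by rewrite mul1r in h *; rewrite gtr0_norm.
by rewrite mulN1r oppr_gt0 in h; rewrite ltr0_norm // mulN1r.
Qed.
End Geo.

Lemma Dg_morph (S S' : comPzRingType) (f : {rmorphism S -> S'}) (a0 a1 a2 a3 a4 a5 a6 a7 a8 a9 : S) :
  f (Dg a0 a1 a2 a3 a4 a5 a6 a7 a8 a9) = Dg (f a0) (f a1) (f a2) (f a3) (f a4) (f a5) (f a6) (f a7) (f a8) (f a9).
Proof. by rewrite /Dg /Lg !(rmorphM, rmorphB, rmorphD, rmorphXn, rmorph_nat). Qed.
Lemma Ng_morph (S S' : comPzRingType) (f : {rmorphism S -> S'}) (a0 a1 a2 a3 a4 a5 a6 a7 a8 a9 : S) :
  f (Ng a0 a1 a2 a3 a4 a5 a6 a7 a8 a9) = Ng (f a0) (f a1) (f a2) (f a3) (f a4) (f a5) (f a6) (f a7) (f a8) (f a9).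
Proof. by rewrite /Ng /Lg !(rmorphM, rmorphB, rmorphD, rmorphXn, rmorph_nat). Qed.

Definition Xv (k : nat) : {mpoly rat[10]} := 'X_(inord k).
Lemma DNex : {pq : {mpoly rat[10]} * {mpoly rat[10]} | forall (R : rcfType) (v : 'I_10 -> R),
   evalQ pq.1 v = Dg (v (inord 0)) (v (inord 1)) (v (inord 2)) (v (inord 3)) (v (inord 4)) (v (inord 5)) (v (inord 6)) (v (inord 7)) (v (inord 8)) (v (inord 9)) /\ evalQ pq.2 v = Ng (v (inord 0)) (v (inord 1)) (v (inord 2)) (v (inord 3)) (v (inord 4)) (v (inord 5)) (v (inord 6)) (v (inord 7)) (v (inord 8)) (v (inord 9)) }.
Proof.
exists (Dg (Xv 0) (Xv 1) (Xv 2) (Xv 3) (Xv 4) (Xv 5) (Xv 6) (Xv 7) (Xv 8) (Xv 9), Ng (Xv 0) (Xv 1) (Xv 2) (Xv 3) (Xv 4) (Xv 5) (Xv 6) (Xv 7) (Xv 8) (Xv 9)) => R v; split.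
  by rewrite /evalQ !Dg_morph /= /Xv !mapX !mevalXU.
by rewrite /evalQ !Ng_morph /= /Xv !mapX !mevalXU.
Qed.
Definition Dp := (proj1_sig DNex).1.
Definition Np := (proj1_sig DNex).2.
Lemma evalDp (R : rcfType) (v : 'I_10 -> R) : evalQ Dp v = Dg (v (inord 0)) (v (inord 1)) (v (inord 2)) (v (inord 3)) (v (inord 4)) (v (inord 5)) (v (inord 6)) (v (inord 7)) (v (inord 8)) (v (inord 9)).
Proof. exact: (proj1 (proj2_sig DNex R v)). Qed.
Lemma evalNp (R : rcfType) (v : 'I_10 -> R) : evalQ Np v = Ng (v (inord 0)) (v (inord 1)) (v (inord 2)) (v (inord 3)) (v (inord 4)) (v (inord 5)) (v (inord 6)) (v (inord 7)) (v (inord 8)) (v (inord 9)).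
Proof. exact: (proj2 (proj2_sig DNex R v)). Qed.

Lemma master (R : rcfType) (P : pentagon R) : cyclic P -> convex P ->
  evalQ Dp (pent_data P) * pent_area P = evalQ Np (pent_data P) /\
  ((forall k, side2 P k != 0) -> side2 P (inord 0) != side2 P (inord 1) ->
    evalQ Dp (pent_data P) != 0).
Proof.
move=> [c [r [hr hc]]] hconv.
have [s [hs hpos]] : exists s : R, (s = 1 \/ s = -1) /\
   forall i j, j != i -> j != nxt i -> 0 < s * orient (P i) (P (nxt i)) (P j).
  case: hconv => h; [exists 1 | exists (-1)]; (split; [by [left | right] | move=> i j h1 h2]).
    by rewrite mul1r; apply: h.
  by rewrite mulN1r oppr_gt0; apply: h.
rewrite evalDp evalNp.
rewrite !(pd0, pd1, pd2, pd3, pd4, pd5, pd6, pd7, pd8, pd9) /vtri_area /side2.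
rewrite !(nxt0, nxt1, nxt2, nxt3, nxt4) !(prv0, prv1, prv2, prv3, prv4) /pent_area sum5 !(nxt0, nxt1, nxt2, nxt3, nxt4).
have := hpos (inord 4) (inord 1) neq14; rewrite nxt4 => /(_ neq10) o0.
have := hpos (inord 0) (inord 2) neq20; rewrite nxt0 => /(_ neq21) o1.
have := hpos (inord 1) (inord 3) neq31; rewrite nxt1 => /(_ neq32) o2.
have := hpos (inord 2) (inord 4) neq42; rewrite nxt2 => /(_ neq43) o3.
have := hpos (inord 3) (inord 0) neq03; rewrite nxt3 => /(_ neq04) o4.
have := hpos (inord 2) (inord 0) neq02; rewrite nxt2 => /(_ neq03) o5.
set p0 := P (inord 0) in o0 o1 o2 o3 o4 o5 *.
set p1 := P (inord 1) in o0 o1 o2 o3 o4 o5 *.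
set p2 := P (inord 2) in o0 o1 o2 o3 o4 o5 *.
set p3 := P (inord 3) in o0 o1 o2 o3 o4 o5 *.
set p4 := P (inord 4) in o0 o1 o2 o3 o4 o5 *.
have c0 : dist2 p0 c = r := hc _.
have c1 : dist2 p1 c = r := hc _.
have c2 : dist2 p2 c = r := hc _.
have c3 : dist2 p3 c = r := hc _.
have c4 : dist2 p4 c = r := hc _.
rewrite (normS hs o0) (normS hs o1) (normS hs o2) (normS hs o3) (normS hs o4).
have eS : p0.1 * p1.2 - p1.1 * p0.2 + (p1.1 * p2.2 - p2.1 * p1.2) + (p2.1 * p3.2 - p3.1 * p2.2)
   + (p3.1 * p4.2 - p4.1 * p3.2) + (p4.1 * p0.2 - p0.1 * p4.2)
   = orient p0 p1 p2 + orient p2 p3 p0 + orient p3 p4 p0 by rewrite /orient; ring.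
rewrite eS (normS hs); last by move: (addr_gt0 (addr_gt0 o1 o5) o4); rewrite -!mulrDr.

have eW : orient p0 p1 p2 + orient p2 p3 p0 + orient p3 p4 p0
   = cr c p0 p1 + cr c p1 p2 + cr c p2 p3 + cr c p3 p4 + cr c p4 p0 by rewrite /orient /cr; ring.
rewrite eW.
have hr0 : r != 0 by rewrite gt_eqF.
have h0 : 4%:R * r * (s * orient p4 p0 p1 / 2%:R) = s * (dist2 p4 p0 * cr c p0 p1 + dist2 p0 p1 * cr c p4 p0)
  by rewrite -(R1 c4 c0 c1); ring.
have h1 : 4%:R * r * (s * orient p0 p1 p2 / 2%:R) = s * (dist2 p0 p1 * cr c p1 p2 + dist2 p1 p2 * cr c p0 p1)
  by rewrite -(R1 c0 c1 c2); ring.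
have h2 : 4%:R * r * (s * orient p1 p2 p3 / 2%:R) = s * (dist2 p1 p2 * cr c p2 p3 + dist2 p2 p3 * cr c p1 p2)
  by rewrite -(R1 c1 c2 c3); ring.
have h3 : 4%:R * r * (s * orient p2 p3 p4 / 2%:R) = s * (dist2 p2 p3 * cr c p3 p4 + dist2 p3 p4 * cr c p2 p3)
  by rewrite -(R1 c2 c3 c4); ring.
have h4 : 4%:R * r * (s * orient p3 p4 p0 / 2%:R) = s * (dist2 p3 p4 * cr c p4 p0 + dist2 p4 p0 * cr c p3 p4)
  by rewrite -(R1 c3 c4 c0); ring.
have [-> ->] := core hr0 hs h0 h1 h2 h3 h4 (R2 c0 c1) (R2 c1 c2).
split => // hne hne01.
have E k : dist2 (P (inord k)) (P (nxt (inord k))) != 0 := hne (inord k).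
move: (E 0%N) (E 1%N) (E 2%N) (E 3%N) (E 4%N); rewrite !(nxt0, nxt1, nxt2, nxt3, nxt4) -/p0 -/p1 -/p2 -/p3 -/p4.
move=> n0 n1 n2 n3 n4.
by rewrite !(mulf_neq0, invr_eq0, expf_neq0, subr_eq0, pnatr_eq0).
Qed.

Definition exP (R : rcfType) : pentagon R := fun i =>
  match nat_of_ord i with
  | 0 => (5%:R, 0) | 1 => (3%:R, 4%:R) | 2 => (-5%:R, 0) | 3 => (-3%:R, -4%:R)
  | _ => (3%:R, -4%:R) end.

Lemma exP_cyclic (R : rcfType) : cyclic (exP R).
Proof.
exists (0, 0), 25%:R; split; first by rewrite ltr0n.
by move=> [[|[|[|[|[|i]]]]] Hi] //=; rewrite /dist2 /=; ring.
Qed.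

Lemma exP_convex (R : rcfType) : convex (exP R).
Proof.
left.
move=> [[|[|[|[|[|i]]]]] Hi] [[|[|[|[|[|j]]]]] Hj] //= h1 h2; rewrite /orient /=.
all: lra.
Qed.

Lemma exP_nz (R : rcfType) : evalQ Dp (pent_data (exP R)) != 0.
Proof.
apply: (master (exP_cyclic R) (exP_convex R)).2.
  move=> [[|[|[|[|[|i]]]]] Hi] //=; rewrite /side2 /dist2 /=; apply: lt0r_neq0; lra.
rewrite /side2 /dist2 nxt0 nxt1 /exP !inordK //= -subr_eq0; apply: ltr0_neq0; lra.
Qed.

Theorem theorem6 (R : rcfType) :
  exists N D : {mpoly rat[10]},
    (forall P : pentagon R, cyclic P -> convex P ->
       evalQ D (pent_data P) * pent_area P = evalQ N (pent_data P))
    /\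
    (exists P : pentagon R, cyclic P /\ convex P /\ evalQ D (pent_data P) != 0).
Proof.
exists Np, Dp; split.
  by move=> P hc hv; exact: (master hc hv).1.
by exists (exP R); split; [exact: exP_cyclic | split; [exact: exP_convex | exact: exP_nz]].
Qed.
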